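(* Let $A\in\mathbb{R}^{n\times d}$, let $f:\mathbb{R}^n\to\mathbb{R}\cup\{+\infty\}$ and $g:\mathbb{R}^d\to\mathbb{R}\cup\{+\infty\}$ be closed convex, with $f$ $(1/\gamma)$-smooth ($\gamma\ge0$) and $g$ $\mu$-strongly convex ($\mu\ge0$), and let $R=\|A\|_2$. Consider the iterates of the DAPD method (described in the context) and the functions $\phi_t$ and values $\phi_t^*=\min_{x}\phi_t(x)$ defined in the context. Fix $t\ge0$ and assume $\eta_t(1+B_{t-1}\mu)\ge\beta_t$. Then $$\phi_{t+1}^*-\phi_t^*\ge\beta_t\left(g(\bar{x}^{t+1})+\langle y^{t+1},A\bar{x}^{t+1}\rangle\right)-\frac{\beta_tR^2\eta_t}{2}\|y^{t+1}-y^t\|_2^2.$$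
   Context: $f^*$ is the convex conjugate of $f$; $\operatorname{prox}_h(u)=\arg\min_v\{h(v)+\frac12\|v-u\|_2^2\}$. Convention: $\gamma=0$ means $f$ need not be smooth; $\mu=0$ means $g$ is merely convex. DAPD method: given $x^0\in\mathbb{R}^d$, $y^0\in\mathbb{R}^n$ and positive step sizes $\{\beta_t\},\{\eta_t\},\{\tau_t\}$, set $B_t=\sum_{k=0}^t\beta_k$ (with $B_{-1}=0$) and for $t=0,1,\dots$ compute $\bar{x}^{t+1}=\operatorname{prox}_{\eta_t g}(x^t-\eta_tA^\top y^t)$, $y^{t+1}=\operatorname{prox}_{\tau_t f^*}(y^t+\tau_tA\bar{x}^{t+1})$, $x^{t+1}=\operatorname{prox}_{B_tg}(x^0-\sum_{k=0}^t\beta_kA^\top y^{k+1})$. Potential: $\phi_t(x)=\frac12\|x-x^0\|_2^2+\sum_{k=0}^{t-1}\beta_k\big(g(x)+\langle y^{k+1},Ax\rangle\big)$ (so $\phi_0(x)=\frac12\|x-x^0\|_2^2$), and $\phi_t^*=\min_{x\in\mathbb{R}^d}\phi_t(x)$. *)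

(* Defs.v *)
From HB Require Import structures.
From mathcomp Require Import all_boot all_order all_algebra.
From mathcomp Require Import all_classical all_reals all_analysis.
Set Implicit Arguments. Unset Strict Implicit. Unset Printing Implicit Defensive.
Import Order.TTheory GRing.Theory Num.Theory.
Local Open Scope classical_set_scope.
Local Open Scope ring_scope.

Section Defs.
Variable R : realType.

Definition dotv (m : nat) (u v : 'cV[R]_m) : R := \sum_(i < m) u i 0 * v i 0.
Definition norm2 (m : nat) (u : 'cV[R]_m) : R := Num.sqrt (dotv u u).

Definition opnorm (n d : nat) (A : 'M[R]_(n, d)) : R :=
  sup [set norm2 (A *m x) | x in [set x : 'cV[R]_d | norm2 x <= 1]].

(* proper: never -oo (by the codomain R U {+oo}) and not identically +oo *)
Definition proper_fun (m : nat) (h : 'cV[R]_m -> \bar R) : Prop :=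
  (forall x, h x != -oo%E) /\ exists x, h x != +oo%E.

Definition convex_fun (m : nat) (h : 'cV[R]_m -> \bar R) : Prop :=
  forall (x y : 'cV[R]_m) (l : R), 0 < l < 1 ->
    (h (l *: x + (1 - l) *: y)%R <= l%:E * h x + (1 - l)%R%:E * h y)%E.

(* closed = lower semicontinuous = all sublevel sets are (sequentially) closed *)
Definition closed_fun (m : nat) (h : 'cV[R]_m -> \bar R) : Prop :=
  forall (alpha : R) (u : nat -> 'cV[R]_m) (x : 'cV[R]_m),
    (fun k => norm2 (u k - x)) @ \oo --> 0 ->
    (forall k, (h (u k) <= alpha%:E)%E) -> (h x <= alpha%:E)%E.

Definition strongly_convex (m : nat) (mu : R) (h : 'cV[R]_m -> \bar R) : Prop :=
  forall (x y : 'cV[R]_m) (l : R), 0 < l < 1 ->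
    (h (l *: x + (1 - l) *: y)%R <=
       l%:E * h x + (1 - l)%R%:E * h y
       - (mu / 2 * l * (1 - l) * (norm2 (x - y)) ^+ 2)%R%:E)%E.

(* (1/gamma)-smoothness; gamma = 0 means no smoothness assumption.
   For gamma > 0: h is finite, differentiable with gradient G, and G is
   (1/gamma)-Lipschitz. *)
Definition smooth_inv (m : nat) (gamma : R) (h : 'cV[R]_m -> \bar R) : Prop :=
  gamma = 0 \/
  (0 < gamma /\ exists (h0 : 'cV[R]_m -> R) (G : 'cV[R]_m -> 'cV[R]_m),
     (forall x, h x = (h0 x)%:E) /\
     (forall x (eps : R), 0 < eps -> exists2 del : R, 0 < del &
        forall hh : 'cV[R]_m, norm2 hh < del ->
          `|h0 (x + hh) - h0 x - dotv (G x) hh| <= eps * norm2 hh) /\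
     (forall x y, norm2 (G x - G y) <= gamma^-1 * norm2 (x - y))).

Definition conj_fun (m : nat) (h : 'cV[R]_m -> \bar R) (y : 'cV[R]_m) : \bar R :=
  ereal_sup [set ((dotv y x)%:E - h x)%E | x in [set: 'cV[R]_m]].

Definition is_prox (m : nat) (h : 'cV[R]_m -> \bar R) (u p : 'cV[R]_m) : Prop :=
  forall v : 'cV[R]_m,
    (h p + (2^-1 * norm2 (p - u)%R ^+ 2)%R%:E <= h v + (2^-1 * norm2 (v - u)%R ^+ 2)%R%:E)%E.

(* B_{t-1} = Bsum beta t = sum_{k < t} beta_k  (so B_{-1} = Bsum beta 0 = 0) *)
Definition Bsum (beta : nat -> R) (t : nat) : R := \sum_(k < t) beta k.

Definition phi (n d : nat) (A : 'M[R]_(n, d)) (g : 'cV[R]_d -> \bar R)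
  (beta : nat -> R) (y : nat -> 'cV[R]_n) (x0 : 'cV[R]_d) (t : nat)
  (x : 'cV[R]_d) : \bar R :=
  ((2^-1 * norm2 (x - x0)%R ^+ 2)%R%:E +
   \sum_(k < t) (beta k)%:E * (g x + (dotv (y k.+1) (A *m x))%:E))%E.

(* phi_t^* = min_x phi_t(x) (taken as the infimum, which is attained) *)
Definition phistar (n d : nat) (A : 'M[R]_(n, d)) (g : 'cV[R]_d -> \bar R)
  (beta : nat -> R) (y : nat -> 'cV[R]_n) (x0 : 'cV[R]_d) (t : nat) : \bar R :=
  ereal_inf [set phi A g beta y x0 t x | x in [set: 'cV[R]_d]].

End Defs.

(* Main.v *)
Require Import Defs.
From HB Require Import structures.
From mathcomp Require Import all_boot all_order all_algebra.
From mathcomp Require Import all_classical all_reals all_analysis.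
From mathcomp Require Import ring lra.
Import Order.TTheory GRing.Theory Num.Theory.
Set Implicit Arguments. Unset Strict Implicit. Unset Printing Implicit Defensive.
Local Open Scope classical_set_scope.
Local Open Scope ring_scope.

Section Helpers.
Variable R : realType.

Lemma dotvC m (u v : 'cV[R]_m) : dotv u v = dotv v u.
Proof. by rewrite /dotv; apply: eq_bigr => i _; rewrite mulrC. Qed.

Lemma dotvDl m (u v w : 'cV[R]_m) : dotv (u + v) w = dotv u w + dotv v w.
Proof. by rewrite /dotv -big_split; apply: eq_bigr => i _; rewrite mxE mulrDl. Qed.

Lemma dotvZl m a (u w : 'cV[R]_m) : dotv (a *: u) w = a * dotv u w.
Proof. by rewrite /dotv mulr_sumr; apply: eq_bigr => i _; rewrite mxE mulrA. Qed.

Lemma dotvNl m (u w : 'cV[R]_m) : dotv (- u) w = - dotv u w.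
Proof. by rewrite -scaleN1r dotvZl mulN1r. Qed.

Lemma dotvBl m (u v w : 'cV[R]_m) : dotv (u - v) w = dotv u w - dotv v w.
Proof. by rewrite dotvDl dotvNl. Qed.

Lemma dotvDr m (u v w : 'cV[R]_m) : dotv w (u + v) = dotv w u + dotv w v.
Proof. by rewrite dotvC dotvDl !(dotvC w). Qed.

Lemma dotvZr m a (u w : 'cV[R]_m) : dotv w (a *: u) = a * dotv w u.
Proof. by rewrite dotvC dotvZl dotvC. Qed.

Lemma dotvBr m (u v w : 'cV[R]_m) : dotv w (u - v) = dotv w u - dotv w v.
Proof. by rewrite dotvC dotvBl !(dotvC w). Qed.

Lemma dotvNr m (u w : 'cV[R]_m) : dotv w (- u) = - dotv w u.
Proof. by rewrite dotvC dotvNl dotvC. Qed.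

Lemma dotv0l m (w : 'cV[R]_m) : dotv 0 w = 0.
Proof. by rewrite /dotv big1 // => i _; rewrite mxE mul0r. Qed.

Lemma dotv_sumZl m t (a : nat -> R) (u : nat -> 'cV[R]_m) w :
  dotv (\sum_(k < t) a k *: u k) w = \sum_(k < t) a k * dotv (u k) w.
Proof.
elim: t => [|t IH]; first by rewrite !big_ord0 dotv0l.
by rewrite !big_ord_recr /= dotvDl IH dotvZl.
Qed.

Lemma dotvE m (u v : 'cV[R]_m) : dotv u v = (u^T *m v) 0 0.
Proof. by rewrite /dotv mxE; apply: eq_bigr => i _; rewrite mxE. Qed.

Lemma dotv_mulmx n d (A : 'M[R]_(n, d)) u w :
  dotv u (A *m w) = dotv (A^T *m u) w.
Proof. by rewrite !dotvE trmx_mul trmxK mulmxA. Qed.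

Lemma dotv_ge0 m (u : 'cV[R]_m) : 0 <= dotv u u.
Proof. by rewrite /dotv; apply: sumr_ge0 => i _; rewrite -expr2 sqr_ge0. Qed.

Lemma n2E m (u : 'cV[R]_m) : norm2 u ^+ 2 = dotv u u.
Proof. by rewrite /norm2 sqr_sqrtr // dotv_ge0. Qed.

Lemma norm2_ge0 m (u : 'cV[R]_m) : 0 <= norm2 u.
Proof. exact: sqrtr_ge0. Qed.

Lemma dotv0_eq0 m (u : 'cV[R]_m) : dotv u u = 0 -> u = 0.
Proof.
move=> h; apply/matrixP => i j; rewrite (ord1 j) mxE.
have hp : forall k : 'I_m, xpredT k -> 0 <= u k 0 * u k 0.
  by move=> k _; rewrite -expr2 sqr_ge0.
have /eqP := @psumr_eq0P R _ xpredT (fun i => u i 0 * u i 0) hp h i isT.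
by rewrite mulf_eq0 orbb => /eqP.
Qed.

Lemma norm2Z m c (u : 'cV[R]_m) : norm2 (c *: u) = `|c| * norm2 u.
Proof.
by rewrite /norm2 dotvZl dotvZr mulrA -expr2 sqrtrM ?sqr_ge0 // sqrtr_sqr.
Qed.


Lemma coord_le m (x : 'cV[R]_m) j : `|x j 0| <= norm2 x.
Proof.
rewrite -sqrtr_sqr /norm2 ler_sqrt ?dotv_ge0 // /dotv (bigD1 j) //= expr2.
rewrite lerDl; apply: sumr_ge0 => i _; by rewrite -expr2 sqr_ge0.
Qed.

Lemma norm2_0 m : norm2 (0 : 'cV[R]_m) = 0.
Proof. by rewrite /norm2 dotv0l sqrtr0. Qed.

Lemma opnorm_bounded n d (A : 'M[R]_(n, d)) :
  exists M, forall x, norm2 x <= 1 -> norm2 (A *m x) <= M.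
Proof.
pose c i := \sum_(j < d) `|A i j|.
exists (Num.sqrt (\sum_(i < n) c i * c i)) => x hx.
rewrite /norm2 ler_sqrt; last by apply: sumr_ge0 => i _; rewrite -expr2 sqr_ge0.
apply: ler_sum => i _.
have h : `|(A *m x) i 0| <= c i.
  rewrite mxE; apply: (le_trans (ler_norm_sum _ _ _)); apply: ler_sum => j _.
  rewrite normrM; apply: ler_piMr => //.
  exact: le_trans (coord_le x j) hx.
move: h; set a := (A *m x) i 0; move=> /ler_normlP [h1 h2]; nra.
Qed.

Lemma opnorm_le n d (A : 'M[R]_(n, d)) w :
  norm2 (A *m w) <= opnorm A * norm2 w.
Proof.
have hs : has_sup [set norm2 (A *m x) | x in [set x : 'cV[R]_d | norm2 x <= 1]].
  split; first by exists (norm2 (A *m 0)); exists 0 => //=; rewrite norm2_0.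
  have [M hM] := opnorm_bounded A.
  by exists M => _ [x hx <-]; exact: hM.
have [h0|hpos] := eqVneq (norm2 w) 0.
  have : dotv w w = 0.
    move: h0 => /eqP; rewrite /norm2 sqrtr_eq0 => hle.
    by apply/eqP; rewrite eq_le hle dotv_ge0.
  by move=> /dotv0_eq0 ->; rewrite mulmx0 norm2_0 norm2_0 mulr0.
have kp : 0 < norm2 w by rewrite lt_neqAle eq_sym hpos norm2_ge0.
have hx : norm2 ((norm2 w)^-1 *: w) <= 1.
  by rewrite norm2Z ger0_norm ?invr_ge0 ?norm2_ge0 // mulVf.
have := sup_upper_bound hs (ex_intro2 _ _ ((norm2 w)^-1 *: w) hx erefl).
rewrite -scalemxAr norm2Z ger0_norm ?invr_ge0 ?norm2_ge0 // => h.
rewrite /opnorm; move: h; rewrite ler_pdivrMl // => h; by rewrite mulrC.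
Qed.


Lemma cauchy_op n d (A : 'M[R]_(n, d)) (a : 'cV[R]_n) (w : 'cV[R]_d) (e : R) :
  0 < e ->
  2 * e * dotv a (A *m w) <= norm2 w ^+ 2 + e ^+ 2 * opnorm A ^+ 2 * norm2 a ^+ 2.
Proof.
move=> ep; set b := A *m w; set Rn := opnorm A.
have hb := opnorm_le A w; rewrite -/b -/Rn in hb.
have Z0 := dotv_ge0 a; have E0 := dotv_ge0 w.
rewrite !n2E.
have [h0|hpos] := eqVneq (norm2 b) 0.
  have : dotv b b = 0.
    move: h0 => /eqP; rewrite /norm2 sqrtr_eq0 => hle.
    by apply/eqP; rewrite eq_le hle dotv_ge0.
  move=> /dotv0_eq0 ->; rewrite /dotv big1 ?mulr0 => [|i _]; last by rewrite mxE mulr0.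
  by apply: addr_ge0 => //; apply: mulr_ge0 => //; apply: mulr_ge0; rewrite sqr_ge0.
have bp : 0 < norm2 b by rewrite lt_neqAle eq_sym hpos norm2_ge0.
have w0 := norm2_ge0 w.
have hb2 : dotv b b <= Rn ^+ 2 * dotv w w.
  rewrite -!n2E; have := norm2_ge0 b; nra.
have Rn0 : Rn != 0 by apply/eqP => h; move: hb; rewrite h mul0r; move: bp; lra.
have Rp : 0 < Rn ^+ 2 by rewrite exprn_even_gt0.
have hq := dotv_ge0 ((e * Rn ^+ 2) *: a - b).
rewrite dotvBl !dotvBr !dotvZl !dotvZr (dotvC b a) in hq.
rewrite -(ler_pM2l Rp); lra.
Qed.


Lemma lim_l (X Y K : R) : 0 <= K ->
  (forall l, 0 < l < 1 -> X <= Y - (1 - l) * K) -> X <= Y - K.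
Proof.
move=> K0 H; rewrite leNgt; apply/negP => hlt.
have h12 : X <= Y - (1 - 2^-1) * K.
  by apply: H; apply/andP; split; [rewrite invr_gt0 | rewrite invf_lt1]; rewrite ?ltr0n ?ltr1n.
have Kp : 0 < K by lra.
pose e := X - Y + K.
have ep : 0 < e by rewrite /e; lra.
have hl := H (e / (2 * K)).
have l0 : 0 < e / (2 * K) by apply: divr_gt0 => //; lra.
have lK : e / (2 * K) * K = e / 2.
  by field; apply/eqP; lra.
have l1 : e / (2 * K) < 1.
  rewrite ltr_pdivrMr; last lra.
  rewrite /e; lra.
have := hl (introT andP (conj l0 l1)); rewrite mulrBl mul1r lK /e; lra.
Qed.

Lemma nsq_comb m (u v p : 'cV[R]_m) (l : R) :
  norm2 (l *: v + (1 - l) *: p - u) ^+ 2 =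
  l * norm2 (v - u) ^+ 2 + (1 - l) * norm2 (p - u) ^+ 2
  - l * (1 - l) * norm2 (v - p) ^+ 2.
Proof.
have e1 : l *: v + (1 - l) *: p - u = l *: (v - u) + (1 - l) *: (p - u).
  by apply/matrixP => i j; rewrite !mxE; ring.
have e2 : v - p = (v - u) - (p - u).
  by apply/matrixP => i j; rewrite !mxE; ring.
rewrite e1 e2 !n2E; move: (v - u) (p - u) => a b.
rewrite ?dotvDl ?dotvNl ?dotvDr ?dotvNr ?dotvZl ?dotvZr (dotvC b a); ring.
Qed.

Lemma prox_strong m (h : 'cV[R]_m -> \bar R) (c mu : R) (u p : 'cV[R]_m) :
  (forall x, h x != -oo%E) -> (exists x0, h x0 != +oo%E) -> 0 < c -> 0 <= mu ->
  strongly_convex mu h ->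
  is_prox (fun v => (c%:E * h v)%E) u p ->
  exists hp : R, h p = hp%:E /\
  forall v hv, h v = hv%:E ->
    c * hp + 2^-1 * norm2 (p - u) ^+ 2 + (1 + c * mu) / 2 * norm2 (v - p) ^+ 2
      <= c * hv + 2^-1 * norm2 (v - u) ^+ 2.
Proof.
move=> hninf [x0 hx0] cp mu0 hsc hprox.
have [hp hpE] : exists hp, h p = hp%:E.
  have := hprox x0; move: hx0 (hninf x0) (hninf p).
  case: (h x0) => [r0| |] //= _ _.
  case: (h p) => [rp| |] //=; first by exists rp.
  by move=> _; rewrite mulry gtr0_sg // mul1e addye // -EFinM -EFinD leye_eq.
exists hp; split => // v hv hvE.
have key : forall l, 0 < l < 1 ->
    c * hp + 2^-1 * norm2 (p - u) ^+ 2 <=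
    c * hv + 2^-1 * norm2 (v - u) ^+ 2 - (1 - l) * ((1 + c * mu) / 2 * norm2 (v - p) ^+ 2).
  move=> l hl01; case/andP: (hl01) => l0 l1.
  have hs := hsc v p l hl01.
  have hz := hprox (l *: v + (1 - l) *: p).
  move: hs hz; rewrite hvE hpE.
  case hzE: (h (l *: v + (1 - l) *: p)) => [rz| |] //=; last first.
    by move: (hninf (l *: v + (1 - l) *: p)); rewrite hzE.
  - rewrite -!EFinM -!EFinD !lee_fin => hs hz.
    rewrite nsq_comb in hz.
    have hs' : c * rz <= c * (l * hv + (1 - l) * hp - mu / 2 * l * (1 - l) * norm2 (v - p) ^+ 2).
      by rewrite ler_pM2l.
    have D0 : 0 <= norm2 (v - p) ^+ 2 by rewrite sqr_ge0.
    rewrite -(ler_pM2l l0).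
    have : 0 <= c * mu * l * (1 - l) * norm2 (v - p) ^+ 2.
      by apply: mulr_ge0 => //; apply: mulr_ge0; [apply: mulr_ge0; [apply: mulr_ge0|]|]; lra.
    nra.
have K0 : 0 <= (1 + c * mu) / 2 * norm2 (v - p) ^+ 2.
  rewrite mulr_ge0 ?sqr_ge0 //.
  by apply: divr_ge0 => //; have := mulr_ge0 (ltW cp) mu0; lra.
have := lim_l K0 key; lra.
Qed.


Definition Qf n d (A : 'M[R]_(n, d)) (beta : nat -> R) (y : nat -> 'cV[R]_n)
  (x0 : 'cV[R]_d) (s : nat) (v : 'cV[R]_d) : R :=
  2^-1 * norm2 (v - x0) ^+ 2 + \sum_(k < s) beta k * dotv (y k.+1) (A *m v).

Lemma Bsum_ge0 (beta : nat -> R) s : (forall t, 0 < beta t) -> 0 <= Bsum beta s.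
Proof. by move=> hb; apply: sumr_ge0 => k _; exact: ltW. Qed.

Lemma Bsum_gt0 (beta : nat -> R) s : (forall t, 0 < beta t) -> 0 < Bsum beta s.+1.
Proof.
move=> hb; rewrite /Bsum big_ord_recr /=.
by apply: ltr_wpDl; [exact: Bsum_ge0|].
Qed.

Lemma phi_eq n d (A : 'M[R]_(n, d)) (g : 'cV[R]_d -> \bar R) beta y x0 s v :
  (forall t, 0 < beta t) -> g v != -oo%E ->
  phi A g beta y x0 s v = ((Bsum beta s)%:E * g v + (Qf A beta y x0 s v)%:E)%E.
Proof.
move=> hb; rewrite /phi /Qf; case: (g v) => [r| |] // _.
- under eq_bigr do rewrite -EFinD -EFinM.
  rewrite sumEFin -!EFinM -!EFinD; congr EFin.
  rewrite /Bsum mulr_suml addrCA -big_split /=; congr (_ + _).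
  by apply: eq_bigr => k _; rewrite mulrDr.
- case: s => [|s].
    by rewrite !big_ord0 /Bsum big_ord0 mul0e add0e adde0 addr0.
  rewrite mulry gtr0_sg ?Bsum_gt0 // mul1e addye //.
  rewrite big_ord_recr /= addye // mulry gtr0_sg // mul1e addey //.
  apply/negP => /eqP h.
  have : (0 <= \sum_(i < s) (beta i)%:E * (+oo + (dotv (y i.+1) (A *m v))%:E))%E.
    by apply: sume_ge0 => k _; rewrite addye // mulry gtr0_sg // mul1e.
  by rewrite h.
Qed.


Lemma Qid n d (A : 'M[R]_(n, d)) beta y x0 s :
  exists C, forall v, Qf A beta y x0 s v =
    2^-1 * norm2 (v - (x0 - \sum_(k < s) beta k *: (A^T *m y k.+1))) ^+ 2 + C.
Proof.
set S := \sum_(k < s) _.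
exists (dotv S x0 - 2^-1 * dotv S S) => v.
have e1 : v - (x0 - S) = (v - x0) + S.
  by apply/matrixP => i j; rewrite !mxE; ring.
have hs : \sum_(k < s) beta k * dotv (y k.+1) (A *m v) = dotv S v.
  by rewrite /S (dotv_sumZl s beta (fun k => A^T *m y k.+1)); apply: eq_bigr => k _; rewrite dotv_mulmx.
rewrite /Qf hs e1 !n2E !dotvDl !dotvDr.
rewrite ?dotvNl ?dotvNr (dotvC x0 v) (dotvC v S) (dotvC x0 S).
lra.
Qed.

Lemma nsq_shift m (a c w : 'cV[R]_m) e :
  norm2 (a - (c - e *: w)) ^+ 2 =
  norm2 (a - c) ^+ 2 + 2 * e * (dotv w a - dotv w c) + e ^+ 2 * dotv w w.
Proof.
have e1 : a - (c - e *: w) = (a - c) + e *: w.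
  by apply/matrixP => i j; rewrite !mxE; ring.
rewrite e1 !n2E !dotvDl !dotvDr !dotvZl !dotvZr ?dotvNl ?dotvNr (dotvC c w) (dotvC a w) (dotvC c a); lra.
Qed.

Lemma norm2B_sym m (a b : 'cV[R]_m) : norm2 (a - b) = norm2 (b - a).
Proof. by rewrite -opprB -scaleN1r norm2Z normrN1 mul1r. Qed.

End Helpers.
Theorem lemma2p1 (R : realType) (n d : nat) (A : 'M[R]_(n, d))
  (f : 'cV[R]_n -> \bar R) (g : 'cV[R]_d -> \bar R) (gamma mu : R)
  (hgamma : 0 <= gamma) (hmu : 0 <= mu)
  (hf_proper : proper_fun f) (hf_convex : convex_fun f) (hf_closed : closed_fun f)
  (hf_smooth : smooth_inv gamma f)
  (hg_proper : proper_fun g) (hg_convex : convex_fun g) (hg_closed : closed_fun g)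
  (hg_strong : strongly_convex mu g)
  (beta eta tau : nat -> R)
  (hbeta : forall t, 0 < beta t) (heta : forall t, 0 < eta t) (htau : forall t, 0 < tau t)
  (x xbar : nat -> 'cV[R]_d) (y : nat -> 'cV[R]_n)
  (hxbar : forall t, is_prox (fun v => ((eta t)%:E * g v)%E)
                       (x t - eta t *: (A^T *m y t)) (xbar t.+1))
  (hy : forall t, is_prox (fun v => ((tau t)%:E * conj_fun f v)%E)
                    (y t + tau t *: (A *m xbar t.+1)) (y t.+1))
  (hx : forall t, is_prox (fun v => ((Bsum beta t.+1)%:E * g v)%E)
                    (x 0%N - \sum_(k < t.+1) beta k *: (A^T *m y k.+1)) (x t.+1))
  (t : nat) (hstep : eta t * (1 + Bsum beta t * mu) >= beta t) :
  (phistar A g beta y (x 0%N) t.+1 - phistar A g beta y (x 0%N) t >=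
     (beta t)%:E * (g (xbar t.+1) + (dotv (y t.+1) (A *m xbar t.+1))%:E)
     - (beta t * opnorm A ^+ 2 * eta t / 2 * norm2 (y t.+1 - y t) ^+ 2)%:E)%E.
Proof.
have gninf := hg_proper.1; have gex := hg_proper.2.
set x0 := x 0%N.
have L1 : forall s, exists P : R, phi A g beta y x0 s (x s) = P%:E /\
   forall v, (P%:E + ((1 + Bsum beta s * mu) / 2 * norm2 (v - x s) ^+ 2)%:E
              <= phi A g beta y x0 s v)%E.
  case=> [|s].
  - exists 0; split.
      rewrite phi_eq // /Bsum big_ord0 mul0e add0e /Qf big_ord0 -/x0 subrr norm2_0.
      by congr EFin; rewrite expr2 !mulr0 addr0.
    move=> v; rewrite phi_eq // /Bsum big_ord0 mul0e add0e /Qf big_ord0 -/x0.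
    rewrite ?add0e lee_fin; lra.
  - have [hp [hpE H]] := prox_strong gninf gex (Bsum_gt0 s hbeta) hmu hg_strong (hx s).
    have [C hC] := Qid A beta y x0 s.+1.
    exists (Bsum beta s.+1 * hp + Qf A beta y x0 s.+1 (x s.+1)); split.
      by rewrite phi_eq // hpE -EFinM -EFinD.
    move=> v; rewrite phi_eq // !hC.
    case hv: (g v) => [r| |].
    + rewrite -EFinM -!EFinD lee_fin; have := H v r hv; rewrite -/x0; lra.
    + by rewrite mulry gtr0_sg ?Bsum_gt0 // mul1e addye // leey.
    + by have := gninf v; rewrite hv.
have L2 : forall s, phistar A g beta y x0 s = phi A g beta y x0 s (x s).
  move=> s; have [P [PE HP]] := L1 s.
  apply/le_anti/andP; split.
    by apply: ereal_inf_lbound; exists (x s).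
  apply: le_ereal_inf_tmp => _ [v _ <-].
  apply: le_trans (HP v); rewrite PE -EFinD lee_fin lerDl mulr_ge0 ?sqr_ge0 //.
  apply: divr_ge0 => //; have := mulr_ge0 (Bsum_ge0 s hbeta) hmu; lra.
have [P0 [P0E HP0]] := L1 t.
have [gV [gVE HV]] := prox_strong gninf gex (Bsum_gt0 t hbeta) hmu hg_strong (hx t).
have [gXb [gXbE HXb]] := prox_strong gninf gex (heta t) hmu hg_strong (hxbar t).
have hsplit : forall v, phi A g beta y x0 t.+1 v =
   (phi A g beta y x0 t v + (beta t)%:E * (g v + (dotv (y t.+1) (A *m v))%:E))%E.
  by move=> v; rewrite /phi big_ord_recr /= addeA.
rewrite !L2 P0E hsplit phi_eq // gVE gXbE.
have h1 := HP0 (x t.+1); rewrite phi_eq // gVE in h1.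
move: h1; rewrite -!EFinM -!EFinD lee_fin => h1.
rewrite ?EFinB lee_fin.
have h2 := HXb (x t.+1) gV gVE.
rewrite !nsq_shift -!dotv_mulmx in h2.
have hc := cauchy_op A (y t.+1 - y t) (xbar t.+1 - x t.+1) (heta t).
rewrite mulmxBr dotvBl !dotvBr (norm2B_sym (xbar t.+1)) in hc.
have bp := hbeta t; have ep := heta t.
have hA := ler_wpM2l (ltW bp) h2.
have hB := ler_wpM2l (ltW bp) hc.
have hC := ler_wpM2l (ltW ep) h1.
have D0 := sqr_ge0 (norm2 (x t.+1 - x t)).
have hD := ler_wpM2r D0 hstep.
have K0 : 0 <= beta t * norm2 (xbar t.+1 - x t) ^+ 2 by rewrite mulr_ge0 ?sqr_ge0 // ltW.
have E0 := sqr_ge0 (norm2 (x t.+1 - xbar t.+1)).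
have E1 : 0 <= beta t * (eta t * mu) * norm2 (x t.+1 - xbar t.+1) ^+ 2.
  apply: mulr_ge0; [apply: mulr_ge0; [exact: ltW| exact: mulr_ge0 (ltW (heta t)) hmu] | exact: sqr_ge0].
have e2 : 0 < eta t * 2 by rewrite mulr_gt0.
rewrite -(ler_pM2l e2).
lra.
Qed.
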